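(* Let $L$ be an LP in standard form: minimize $c^{\top}x$ subject to $Ax=b$, $Bx\le d$, $x\in\mathbb{R}^n$, with feasible set $\mathcal{F}$, and let $H$ be a subgroup of $G^{\rm Null}_{(A,B,d,c)}$. Let $\mathrm{Fix}_H(\mathbb{R}^n)=\{x\in\mathbb{R}^n: h(x)=x \text{ for all } h\in H\}$ and $\mathcal{T}=\mathcal{F}\cap \mathrm{Fix}_H(\mathbb{R}^n)$. Then $\mathcal{T}$ is non-empty if and only if $H$ is a subgroup of $G(A,b,B,d,c)^{\rm LP}$.
   Context: Here $A\in\mathbb{R}^{m\times n}$, $b\in\mathbb{R}^m$, $B\in\mathbb{R}^{m'\times n}$, $d\in\mathbb{R}^{m'}$, $c\in\mathbb{R}^n$. A constraint is redundant if deleting it does not change the feasible set. $L$ is in standard form if $\mathcal{F}\neq\emptyset$, $L$ has no redundant (equality or inequality) constraints, and none of the inequalities in $Bx\le d$ is satisfied with equality by every point of $\mathcal{F}$. $S_n$ acts on $\mathbb{R}^n$ by $\pi(x)=(x_{\pi^{-1}(1)},\dots,x_{\pi^{-1}(n)})^{\top}$, and $\Pi$ is the permutation matrix with $\Pi x=\pi(x)$. Define $G^{\rm LP}=\{\pi\in S_n: \pi(x)\in\mathcal{F}\text{ and } c^{\top}\pi(x)=c^{\top}x \text{ for all } x\in\mathcal{F}\}$ and $G(A,b,B,d,c)^{\rm LP}=\{\pi\in G^{\rm LP}:\pi(c)=c\}$. Let $G(B,d,c)$ be the set of $\pi\in S_n$ with $\pi(c)=c$ for which there exists a permutation $\sigma$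 of $\{1,\dots,m'\}$ with $B_{\sigma(i),\pi(j)}=B_{ij}$ and $d_{\sigma(i)}=d_i$ for all $i,j$ (if $B$ is empty, $G(B,d,c)=\{\pi:\pi(c)=c\}$). Let $\mathrm{Stab}(\mathrm{Row}(A))=\{\pi\in S_n:\Pi v\in\mathrm{Row}(A)\ \forall v\in\mathrm{Row}(A)\}$, where $\mathrm{Row}(A)\subseteq\mathbb{R}^n$ is the row space of $A$, and $G^{\rm Null}_{(A,B,d,c)}=\mathrm{Stab}(\mathrm{Row}(A))\cap G(B,d,c)$. *)

(* Defs.v *)
From HB Require Import structures.
From mathcomp Require Import all_boot all_order all_algebra all_fingroup.
Set Implicit Arguments. Unset Strict Implicit. Unset Printing Implicit Defensive.
Import Order.TTheory GRing.Theory Num.Theory.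
Local Open Scope ring_scope.

Section LP.
Variables (R : realFieldType) (m m' n : nat).
Variables (A : 'M[R]_(m, n)) (b : 'cV[R]_m) (B : 'M[R]_(m', n)) (d : 'cV[R]_m')
          (c : 'cV[R]_n).

Definition perm_vec (pi : {perm 'I_n}) (x : 'cV[R]_n) : 'cV[R]_n :=
  \col_i x (pi^-1 i)%g 0.
(* the same permutation matrix Pi acting on a vector of Row(A) (written as a row) *)
Definition perm_rvec (pi : {perm 'I_n}) (v : 'rV[R]_n) : 'rV[R]_n :=
  \row_j v 0 (pi^-1 j)%g.

Definition feasible (x : 'cV[R]_n) : Prop :=
  A *m x = b /\ forall i : 'I_m', (B *m x) i 0 <= d i 0.

Definition feasible_wo_eq (k : 'I_m) (x : 'cV[R]_n) : Prop :=
  (forall i : 'I_m, i != k -> (A *m x) i 0 = b i 0) /\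
  (forall i : 'I_m', (B *m x) i 0 <= d i 0).

Definition feasible_wo_ineq (k : 'I_m') (x : 'cV[R]_n) : Prop :=
  A *m x = b /\ (forall i : 'I_m', i != k -> (B *m x) i 0 <= d i 0).

Definition redundant_eq (k : 'I_m) : Prop :=
  forall x, feasible_wo_eq k x <-> feasible x.
Definition redundant_ineq (k : 'I_m') : Prop :=
  forall x, feasible_wo_ineq k x <-> feasible x.

Definition standard_form : Prop :=
  [/\ exists x, feasible x,
      forall k, ~ redundant_eq k,
      forall k, ~ redundant_ineq k &
      forall k : 'I_m', ~ (forall x, feasible x -> (B *m x) k 0 = d k 0)].

Definition in_GLP (pi : {perm 'I_n}) : Prop :=
  forall x, feasible x -> feasible (perm_vec pi x) /\
                          c^T *m perm_vec pi x = c^T *m x.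

Definition in_GLP_c (pi : {perm 'I_n}) : Prop :=
  in_GLP pi /\ perm_vec pi c = c.

Definition in_GBdc (pi : {perm 'I_n}) : Prop :=
  perm_vec pi c = c /\
  exists sigma : {perm 'I_m'},
    forall (i : 'I_m') (j : 'I_n), B (sigma i) (pi j) = B i j /\ d (sigma i) 0 = d i 0.

Definition in_StabRow (pi : {perm 'I_n}) : Prop :=
  forall v : 'rV[R]_n, (v <= A)%MS -> (perm_rvec pi v <= A)%MS.

Definition in_GNull (pi : {perm 'I_n}) : Prop := in_StabRow pi /\ in_GBdc pi.

End LP.

(* Main.v *)
Require Import Defs.
From HB Require Import structures.
From mathcomp Require Import all_boot all_order all_algebra all_fingroup.
Import Order.TTheory GRing.Theory Num.Theory.
Local Open Scope ring_scope.

Section Helpers.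
Variables (R : realFieldType) (n : nat).

Lemma mul_perm_vec p (M : 'M[R]_(p, n)) (pi : {perm 'I_n}) x i :
  (M *m perm_vec pi x) i 0 = \sum_j M i (pi j) * x j 0.
Proof.
rewrite mxE (reindex_inj (@perm_inj _ pi)); apply: eq_bigr => j _.
by rewrite mxE permK.
Qed.

Lemma sum_mulg (G : {group {perm 'I_n}}) g (F : {perm 'I_n} -> R) :
  g \in G -> \sum_(h in G) F (h * g)%g = \sum_(h in G) F h.
Proof.
move=> gG; rewrite [RHS](reindex_inj (mulIg g)); apply: eq_bigl => h.
by rewrite /= groupMr.
Qed.

End Helpers.

Theorem theorem3 (R : realFieldType) (m m' n : nat)
  (A : 'M[R]_(m, n)) (b : 'cV[R]_m) (B : 'M[R]_(m', n)) (d : 'cV[R]_m')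
  (c : 'cV[R]_n) (H : {group {perm 'I_n}}) :
  standard_form A b B d ->
  (forall h, h \in H -> in_GNull A B d c h) ->
  ((exists x : 'cV[R]_n, feasible A b B d x /\ forall h, h \in H -> perm_vec h x = x)
   <-> (forall h, h \in H -> in_GLP_c A b B d c h)).
Proof.
move=> sf HN; split.
- move=> [x [[Ax Bx] fx]] h hH.
  have [hstab [hc [sigma hs]]] := HN h hH.
  have hiH : (h^-1)%g \in H by rewrite groupV.
  have [histab _] := HN _ hiH.
  have null : forall w, A *m w = 0 -> A *m perm_vec h w = 0.
    move=> w Aw; apply/matrixP => i j; rewrite ord1 mul_perm_vec mxE.
    have := histab (row i A) (row_sub i A) => /submxP [u hu].
    have -> : \sum_j0 A i (h j0) * w j0 0 = (perm_rvec (h^-1)%g (row i A) *m w) 0 0.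
      rewrite mxE; apply: eq_bigr => k _; by rewrite !mxE invgK.
    by rewrite hu -mulmxA Aw mulmx0 mxE.
  split=> // y [Ay By]; split; last first.
    apply/matrixP => i j; rewrite !ord1 mxE [RHS]mxE.
    rewrite (reindex_inj (@perm_inj _ h)); apply: eq_bigr => k _.
    rewrite !mxE permK.
    have := congr1 (fun M : 'cV[R]_n => M (h k) 0) hc; rewrite /= mxE permK => <-.
    by [].
  split.
    have -> : perm_vec h y = perm_vec h (y - x) + perm_vec h x.
      by apply/matrixP => i j; rewrite !mxE subrK.
    by rewrite fx // mulmxDr null ?add0r // mulmxBr Ay Ax subrr.
  move=> k; have [n0|npos] := eqVneq n 0%N.
    have -> : perm_vec h y = y.
      by apply/matrixP => i j; exfalso; move: (nat_of_ord i) (ltn_ord i) => i'; rewrite n0.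
    exact: By.
  have j0 : 'I_n by exists 0%N; rewrite lt0n.
  rewrite -(permKV sigma k).
  have := By (sigma^-1 k)%g.
  rewrite mul_perm_vec mxE (hs (sigma^-1 k)%g j0).2.
  move=> Hle; under eq_bigr => j _ do rewrite (hs (sigma^-1 k)%g j).1.
  exact: Hle.
- move=> hG; case: sf => [[x0 hx0] _ _ _].
  have card_pos : (0 < #|H|)%N by apply/card_gt0P; exists 1%g; exact: group1.
  have cardnz : (#|H|%:R : R) != 0 by rewrite pnatr_eq0 -lt0n.
  pose k := (#|H|%:R : R)^-1.
  have fh : forall h, h \in H -> feasible A b B d (perm_vec h x0).
    by move=> h hH; have [hl _] := hG h hH; have [] := hl _ hx0.
  exists (k *: \sum_(h in H) perm_vec h x0); split.
    split.
      rewrite -scalemxAr mulmx_sumr.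
      under eq_bigr => h hH do rewrite (fh h hH).1.
      by rewrite sumr_const -scaler_nat scalerA mulVf // scale1r.
    move=> i; rewrite -scalemxAr mulmx_sumr mxE summxE.
    apply: le_trans (_ : k * \sum_(h in H) d i 0 <= _).
      rewrite ler_wpM2l ?invr_ge0 ?ler0n //.
      by apply: ler_sum => h hH; exact: (fh h hH).2.
    by rewrite sumr_const -mulr_natr mulrA mulrC mulrA mulfV // mul1r.
  move=> g gH; apply/matrixP => i j; rewrite ord1 !mxE !summxE.
  congr (_ * _).
  rewrite -(@sum_mulg R n H g (fun h => perm_vec h x0 i 0) gH).
  apply: eq_bigr => h _; rewrite !mxE invgM permM.
  by [].
Qed.
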